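(* If $r$ divides $s$, then each of $\nu(n,P^{(r)}_s)$, $\nu^*(n,P^{(r)}_s)$ and $\tau^*(n,P^{(r)}_s)$ equals $\left(\left(\frac{r}{s}\right)^r+o(1)\right)\binom{n}{r}$, where $o(1)\to0$ as $n\to\infty$ with $r,s$ fixed.
   Context: $K^{(r)}_n$ is the ordered complete $r$-uniform hypergraph on $[n]=\{1,\dots,n\}$ with its natural order; a copy of an ordered hypergraph $H$ in $K^{(r)}_n$ is the image of $H$ under an order-preserving injection $V(H)\to[n]$. The natural path $P^{(r)}_s$ has vertices $v_1<\dots<v_s$ and edges all sets of $r$ consecutive vertices $\{v_j,\dots,v_{j+r-1}\}$, $1\le j\le s-r+1$. $\nu(n,H)$ is the maximum number of pairwise edge-disjoint copies of $H$ in $K^{(r)}_n$. A fractional $H$-transversal is a function $w:E(K^{(r)}_n)\to[0,\infty)$ with $\sum_{e\in E(H')}w(e)\ge1$ for every copy $H'$ of $H$; $\tau^*(n,H)$ is the minimum total weight of a fractional $H$-transversal. A fractional $H$-packing is an assignment of weights $w(H')\ge0$ to the copies $H'$ of $H$ in $K^{(r)}_n$ such that for each edge $e$ of $K^{(r)}_n$ the total weight of copies containing $e$ is at most $1$; $\nu^*(n,H)$ is the maximum total weight of a fractional $H$-packing. *)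

(* Defs.v *)
From HB Require Import structures.
From mathcomp Require Import all_boot all_order all_algebra.
From mathcomp Require Import boolp classical_sets reals.
Unset Printing Implicit Defensive.
Import Order.TTheory GRing.Theory Num.Theory.

(* Vertices of K^(r)_n are 'I_n = {0,...,n-1} with its natural order.
   An (r-)edge is a set e : {set 'I_n} with #|e| = r.
   An ordered hypergraph copy is represented by its edge set. *)

(* Edges of the natural path P^(r)_s on vertices 'I_s (v_1<...<v_s is 0<...<s-1):
   all sets of r consecutive vertices {j, ..., j+r-1}, with j + r <= s. *)
Definition path_edges (r s : nat) : {set {set 'I_s}} :=
  [set [set i : 'I_s | (j <= i) && (i < j + r)] | j : 'I_s & j + r <= s].

Definition incr (s n : nat) (f : {ffun 'I_s -> 'I_n}) : bool :=
  [forall i : 'I_s, forall j : 'I_s, (i < j) ==> (f i < f j)].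

Definition copy_of (r s n : nat) (f : {ffun 'I_s -> 'I_n}) : {set {set 'I_n}} :=
  [set (fun x => f x) @: e | e : {set 'I_s} in path_edges r s].

Definition path_copies (r s n : nat) : {set {set {set 'I_n}}} :=
  [set copy_of r s n f | f : {ffun 'I_s -> 'I_n} & incr s n f].

Definition nu_path (r s n : nat) : nat :=
  \max_(P : {set {set {set 'I_n}}} |
          (P \subset path_copies r s n) &&
          [forall C in P, forall D in P, (C != D) ==> [disjoint C & D]])
     #|P|.

Local Open Scope ring_scope.
Local Open Scope classical_set_scope.

Definition frac_packing (R : realType) (r s n : nat)
    (w : {set {set 'I_n}} -> R) : Prop :=
  (forall C, C \in path_copies r s n -> 0 <= w C) /\
  (forall e : {set 'I_n}, #|e| = r ->
     \sum_(C in path_copies r s n | e \in C) w C <= 1).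

Definition nu_star_path (R : realType) (r s n : nat) : R :=
  sup [set (\sum_(C in path_copies r s n) w C)
       | w in [set w : {set {set 'I_n}} -> R | frac_packing R r s n w]].

Definition frac_transversal (R : realType) (r s n : nat)
    (w : {set 'I_n} -> R) : Prop :=
  (forall e : {set 'I_n}, #|e| = r -> 0 <= w e) /\
  (forall C, C \in path_copies r s n -> 1 <= \sum_(e in C) w e).

Definition tau_star_path (R : realType) (r s n : nat) : R :=
  inf [set (\sum_(e : {set 'I_n} | #|e| == r) w e)
       | w in [set w : {set 'I_n} -> R | frac_transversal R r s n w]].

(* Main.v *)
Require Import Defs.
From HB Require Import structures.
From mathcomp Require Import all_boot all_order all_algebra.
From mathcomp Require Import boolp classical_sets reals.
From mathcomp Require Import zify ring lra.
Import Order.TTheory GRing.Theory Num.Theory.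

Definition win (s j r : nat) : {set 'I_s} := [set i : 'I_s | (j <= i) && (i < j + r)].

Lemma path_edgesE r s : path_edges r s = [set win s j r | j : 'I_s & j + r <= s].
Proof. by []. Qed.

Lemma win_card s (j : 'I_s) r : j + r <= s -> #|win s j r| = r.
Proof.
move=> jr.
pose h (t : 'I_r) : 'I_s := insubd j (j + t).
have hv (t : 'I_r) : val (h t) = j + t.
  by rewrite /h val_insubd; case: ifP => //; move: (ltn_ord t); lia.
have hinj : injective h by move=> t t' /(congr1 val); rewrite !hv => /addnI /val_inj.
rewrite -[RHS](card_ord r) -(card_imset _ hinj).
apply: eq_card => i; rewrite [in LHS]inE; apply/andP/imsetP.
  case=> H1 H2; have Hr : i - j < r by lia.
  exists (Ordinal Hr) => //; apply: val_inj; rewrite hv /=; lia.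
by case=> t _ ->; rewrite hv; move: (ltn_ord t); lia.
Qed.

Lemma win_inj r s (j j' : 'I_s) : 0 < r -> win s j r = win s j' r -> j = j'.
Proof.
move=> r0 E.
have h1 : j \in win s j' r by rewrite -E inE leqnn /=; lia.
have h2 : j' \in win s j r by rewrite E inE leqnn /=; lia.
rewrite !inE in h1 h2; case/andP: h1 => h1 _; case/andP: h2 => h2 _; by apply/val_inj/eqP; rewrite /= eqn_leq h1 h2.
Qed.

Lemma incr_inj s n (f : {ffun 'I_s -> 'I_n}) : incr s n f -> injective f.
Proof.
move=> /forallP H i j E; apply/val_inj/eqP; case: (ltngtP i j) => //.
  by move=> ij; have := forallP (H i) j; rewrite ij /= E ltnn.
by move=> ij; have := forallP (H j) i; rewrite ij /= E ltnn.
Qed.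

Lemma copy_edge_card r s n C e : C \in path_copies r s n -> e \in C -> #|e| = r.
Proof.
case/imsetP=> f; rewrite inE => fi -> /imsetP [E]; rewrite path_edgesE.
case/imsetP=> j; rewrite inE => jr -> ->.
by rewrite card_imset ?win_card //; apply: incr_inj.
Qed.

Local Open Scope ring_scope.

Lemma duality (R : realType) r s n (p : {set {set 'I_n}} -> R) (t : {set 'I_n} -> R) :
  frac_packing R r s n p -> frac_transversal R r s n t ->
  \sum_(C in path_copies r s n) p C <= \sum_(e : {set 'I_n} | #|e| == r) t e.
Proof.
case=> p0 p1 [t0 t1].
apply: (@le_trans _ _ (\sum_(C in path_copies r s n) p C * \sum_(e in C) t e)).
  by apply: ler_sum => C HC; apply: ler_peMr; [exact: p0 | exact: t1].
have E : forall C, C \in path_copies r s n -> p C * \sum_(e in C) t e =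
   \sum_(e : {set 'I_n} | #|e| == r) (if e \in C then p C * t e else 0).
  move=> C HC; rewrite mulr_sumr -big_mkcondr; apply: eq_bigl => e.
  by case eC: (e \in C); rewrite ?andbF ?andbT //; rewrite (@copy_edge_card r s n C e HC eC) eqxx.
rewrite (eq_bigr _ E) exchange_big /=; apply: ler_sum => e /eqP er.
rewrite -big_mkcondr -mulr_suml mulrC.
have -> : \sum_(C in path_copies r s n | e \in C) p C =
          \sum_(C | (C \in path_copies r s n) && (e \in C)) p C by [].
by rewrite -[X in _ <= X]mulr1; apply: ler_wpM2l; [exact: t0 | exact: p1].
Qed.

Definition disjfam n (P : {set {set {set 'I_n}}}) :=
  [forall C in P, forall D in P, (C != D) ==> [disjoint C & D]].

Definition indp (R : realType) n (P : {set {set {set 'I_n}}}) (C : {set {set 'I_n}}) : R :=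
  if C \in P then 1 else 0.
Arguments indp R {n} P C.
Arguments disjfam {n} P.

Lemma indp_pack (R : realType) r s n (P : {set {set {set 'I_n}}}) : P \subset path_copies r s n -> disjfam P ->
  frac_packing R r s n (indp R P).
Proof.
move=> sP /forallP dP; split; first by move=> C _; rewrite /indp; case: ifP.
move=> e _.
rewrite /indp -big_mkcondr.
have -> : \sum_(C | (C \in path_copies r s n) && (e \in C) && (C \in P)) (1 : R)
   = (#|[pred C | (C \in path_copies r s n) && (e \in C) && (C \in P)]|)%:R.
  by rewrite -sum1_card natr_sum.
rewrite lern1; apply/card_le1_eqP => C D; rewrite !inE => /andP[/andP[_ eC] CP] /andP[/andP[_ eD] DP].
apply/eqP; apply/negPn/negP => CD.
have H : [disjoint C & D].
  have := forallP (implyP (dP C) CP) D; rewrite DP /= => /implyP; apply.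
  by rewrite eq_sym.
by move: (disjointFr H eC); rewrite eD.
Qed.

Lemma indp_val (R : realType) r s n (P : {set {set {set 'I_n}}}) : P \subset path_copies r s n ->
  \sum_(C in path_copies r s n) indp R P C = (#|P|)%:R.
Proof.
move=> sP; rewrite /indp -big_mkcondr.
rewrite (eq_bigl (fun C => C \in P)); first by rewrite -sum1_card natr_sum.
by move=> C /=; case CP: (C \in P); rewrite ?andbF ?andbT // (fintype.subsetP sP C CP).
Qed.

Local Close Scope ring_scope.
Local Open Scope nat_scope.

Lemma shift_sum (g : nat -> nat) K W d : (forall i, i < W + d -> g i <= K) ->
  \sum_(i < W) g (i + d) <= \sum_(i < W) g i + d * K.
Proof.
elim: d => [|d IH] H; first by rewrite mul0n addn0; under eq_bigr do rewrite addn0.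
have H1 : forall i, i < W + d -> g i <= K by move=> i Hi; apply: H; lia.
have E1 := @big_ord_recl nat 0 addn W (fun i : 'I_W.+1 => g (i + d)).
have E2 := @big_ord_recr nat 0 addn W (fun i : 'I_W.+1 => g (i + d)).
have E3 : \sum_(i < W) g (bump 0 i + d) = \sum_(i < W) g (i + d.+1).
  by apply: eq_bigr => i _; rewrite /bump /= add1n addSnnS.
simpl in E1, E2.
rewrite E3 in E1.
rewrite E1 add0n in E2. have A1 := IH H1. have A2 := H (W + d) ltac:(lia). move: A1 A2 E2. set X := \sum_(i < W) g (i + d.+1). set Y := \sum_(i < W) g (i + d). set Z := \sum_(i < W) g i. move=> A1 A2 E2. lia.
Qed.

Lemma count_const (g : nat -> nat) r k : 0 < r -> 0 < k ->
  (forall i j, i <= j -> j < k * r -> g i <= g j) ->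
  (forall i, i < k * r -> g i <= k.-1) ->
  k <= \sum_(j < k * r - r + 1) (g j == g (j + r.-1)).
Proof.
move=> r0 k0 mono bnd.
set W := k * r - r + 1.
have HW : W + r.-1 = k * r.
  rewrite /W; case: r r0 {mono bnd W} => // r' _; case: k k0 => // k' _; nia.
have step : forall j : 'I_W, g j + (g j != g (j + r.-1)) <= g (j + r.-1).
  move=> j; have := mono j (j + r.-1) (leq_addr _ _) ltac:(move: (ltn_ord j); lia).
  by case: eqP => [->|]; lia.
have S1 : \sum_(j < W) (g j + (g j != g (j + r.-1))) <= \sum_(j < W) g (j + r.-1).
  by apply: leq_sum => j _; exact: step j.
rewrite big_split /= in S1.
have S2 := shift_sum g k.-1 W r.-1 ltac:(move=> i; rewrite HW; exact: bnd i).
have S3 : \sum_(j < W) (g j == g (j + r.-1)) + \sum_(j < W) (g j != g (j + r.-1)) = W.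
  rewrite -big_split /=; rewrite (eq_bigr (fun _ => 1)); first by rewrite sum1_card card_ord.
  by move=> j _; case: eqP.
have HK : W = r.-1 * k.-1 + k.
  rewrite /W; case: r r0 {mono bnd W HW S1 S2 S3 step} => // r' _; case: k k0 => // k' _; nia.
move: S1 S2 S3.
set A := \sum_(j < W) (g j == g (j + r.-1)).
set B := \sum_(j < W) (g j != g (j + r.-1)).
set X := \sum_(j < W) g j.
set Y := \sum_(i < W) g (i + r.-1).
move=> S1 S2 S3; nia.
Qed.

Definition cls (m k x : nat) := minn (x %/ m) k.-1.

Lemma cls_mono m k x y : x <= y -> cls m k x <= cls m k y.
Proof. move=> xy; have := leq_div2r m xy; rewrite /cls; lia. Qed.

Lemma cls_bnd m k x : cls m k x <= k.-1.
Proof. rewrite /cls; lia. Qed.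

Lemma cls_range m k n x j : 0 < m -> 0 < k -> n %/ k = m -> x < n -> cls m k x = j ->
  j * m <= x < j * m + (m + k).
Proof.
move=> m0 k0 nm xn.
have E1 := divn_eq x m; have E2 := ltn_pmod x m0.
have E3 := divn_eq n k; have E4 := ltn_pmod n k0.
rewrite nm in E3.
rewrite /cls; case: (leqP (x %/ m) k.-1) => H.
  move=> Hj; have -> : j = x %/ m by lia.
  lia.
move=> Hj; have -> : j = k.-1 by lia.
have F1 : k.-1 * m <= x %/ m * m by apply: leq_mul => //; apply: ltnW.
have F2 : k * m = k.-1 * m + m by case: k k0 {H F1 E3 E4 nm Hj} => // k' _; rewrite mulSn addnC.
lia.
Qed.

Lemma card_cover_le (T : finType) k (A : {set T}) (B : 'I_k -> {set T}) :
  A \subset \bigcup_(j < k) B j -> #|A| <= \sum_(j < k) #|B j|.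
Proof.
move/subset_leq_card/leq_trans; apply.
elim/big_rec2: _ => [|j n U _ H]; first by rewrite cards0.
by rewrite (leq_trans (leq_card_setU _ _).1) ?leq_add2l.
Qed.

Lemma cls_card n m k j : 0 < m -> 0 < k -> n %/ k = m ->
  #|[set x : 'I_n | cls m k x == j]| <= m + k.
Proof.
move=> m0 k0 nm.
rewrite cardE -(size_map val) -(size_iota (j * m) (m + k)).
apply: uniq_leq_size; first by rewrite (map_inj_uniq val_inj) enum_uniq.
move=> y /mapP [x]; rewrite mem_enum inE => /eqP Hx ->; rewrite mem_iota.
exact: (@cls_range m k n x j m0 k0 nm (ltn_ord x) Hx).
Qed.

Local Open Scope ring_scope.

Definition Tw (R : realType) n m k (e : {set 'I_n}) : R :=
  if [forall x in e, forall y in e, cls m k x == cls m k y] then k%:R^-1 else 0.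

Lemma Tw_val (R : realType) r n m k : (0 < r)%N -> (0 < m)%N -> (0 < k)%N -> (n %/ k)%N = m ->
  \sum_(e : {set 'I_n} | #|e| == r) Tw R n m k e <= ('C(m + k, r))%:R.
Proof.
move=> r0 m0 k0 nm.
set A := [set e : {set 'I_n} | (#|e| == r) && [forall x in e, forall y in e, cls m k x == cls m k y]].
have -> : \sum_(e : {set 'I_n} | #|e| == r) Tw R n m k e = \sum_(e in A) (k%:R^-1 : R).
  rewrite big_mkcond [RHS]big_mkcond; apply: eq_bigr => e _.
  by rewrite /Tw inE; case: (#|e| == r); case: [forall _ in _, _].
rewrite sumr_const.
pose D (j : 'I_k) := [set e : {set 'I_n} | (e \subset [set x : 'I_n | cls m k x == j]) && (#|e| == r)].
have HA : (#|A| <= k * 'C(m + k, r))%N.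
  have sub : A \subset \bigcup_(j < k) D j.
    apply/fintype.subsetP => e; rewrite inE => /andP[/eqP er /forall_inP Hc].
    have : (0 < #|e|)%N by rewrite er.
    case/card_gt0P => x0 x0e.
    have Hj : (cls m k x0 < k)%N by have := cls_bnd m k x0; lia.
    apply/bigcupP; exists (Ordinal Hj) => //.
    rewrite inE er eqxx andbT; apply/fintype.subsetP => y ye; rewrite inE /=.
    by move/forall_inP: (Hc x0 x0e) => /(_ y ye); rewrite eq_sym.
  apply: (leq_trans (@card_cover_le _ _ _ _ sub)).
  rewrite -[k in (_ <= k * _)%N]card_ord -sum_nat_const.
  apply: leq_sum => j _; rewrite cards_draws; apply: leq_bin2l; exact: cls_card.
rewrite -[_ *+ #|A|]mulr_natr.
have kR : (k%:R : R) != 0 by rewrite pnatr_eq0 -lt0n.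
apply: (@le_trans _ _ (k%:R^-1 * (k * 'C(m + k, r))%:R)).
  by rewrite ler_pM2l ?invr_gt0 ?ltr0n // ler_nat.
by rewrite natrM mulrA mulVf // mul1r.
Qed.

Lemma incr_le s n (f : {ffun 'I_s -> 'I_n}) (a b : 'I_s) : incr s n f -> (a <= b)%N -> (f a <= f b)%N.
Proof.
move=> /forallP H; rewrite leq_eqVlt => /orP[/eqP E|ab].
  by have -> : a = b by apply: val_inj.
by have := implyP (forallP (H a) b) ab => /ltnW.
Qed.

Lemma Tw_trans (R : realType) r s n m k : (0 < r)%N -> (0 < k)%N -> s = (k * r)%N ->
  frac_transversal R r s n (Tw R n m k).
Proof.
move=> r0 k0 sE; split.
  by move=> e _; rewrite /Tw; case: ifP => _ //; rewrite invr_ge0 ler0n.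
move=> C /imsetP [f]; rewrite inE => fi ->.
have s0 : (0 < s)%N by rewrite sE muln_gt0 k0 r0.
rewrite /copy_of big_imset /=; last first.
  by move=> E1 E2 _ _; apply: imset_inj; exact: incr_inj.
rewrite path_edgesE big_imset /=; last first.
  by move=> j j' _ _; apply: win_inj.
pose g (i : nat) := cls m k (f (insubd (Ordinal s0) i)).
have gE : forall a : 'I_s, g a = cls m k (f a) by move=> a; rewrite /g valKd.
have gmono : forall i j, (i <= j)%N -> (j < k * r)%N -> (g i <= g j)%N.
  move=> i j ij js; rewrite /g; apply: cls_mono; apply: incr_le => //.
  have js2 : (j < s)%N by rewrite sE.
  have is2 : (i < s)%N by lia.
  by rewrite !val_insubd js2 is2.
have term : forall j : 'I_s, (j + r <= s)%N ->
    ((g j == g (j + r.-1)%N) : nat)%:R * k%:R^-1 <= Tw R n m k [set f x | x in win s j r].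
  move=> j jr; case: eqP => Hg; last by rewrite mul0r /Tw; case: ifP => _ //; rewrite invr_ge0 ler0n.
  rewrite mul1r /Tw.
  have key : forall x, x \in [set f x | x in win s j r] -> cls m k x = g j.
    move=> x /imsetP [a]; rewrite inE => /andP [ja aj] ->.
    rewrite -gE; apply/eqP; rewrite eqn_leq; apply/andP; split.
      rewrite Hg; apply: gmono; [lia | rewrite -sE; lia].
    by apply: gmono => //; rewrite -sE.
  have -> : [forall x in [set f x | x in win s j r], forall y in [set f x | x in win s j r],
       cls m k x == cls m k y] = true.
    by apply/forall_inP => x Hx; apply/forall_inP => y Hy; rewrite (key x Hx) (key y Hy).
  by [].
apply: (@le_trans _ _ (\sum_(j in [set j : 'I_s | (j + r <= s)%N])
   ((g j == g (j + r.-1)%N) : nat)%:R * k%:R^-1)); last first.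
  by apply: ler_sum => j; rewrite inE => Hj; apply: term.
rewrite -mulr_suml -natr_sum.
have -> : (\sum_(j in [set j : 'I_s | (j + r <= s)%N]) (g j == g (j + r.-1)%N) =
          \sum_(j < k * r - r + 1) (g j == g (j + r.-1)%N))%N.
  rewrite (big_ord_widen s (fun j => (g j == g (j + r.-1)%N) : nat)); last by rewrite sE; lia.
  have rs : (r <= s)%N by rewrite sE; nia.
  apply: eq_bigl => j; rewrite inE -sE; move: (ltn_ord j) => jl; apply/idP/idP; lia.
have Hc := @count_const g r k r0 k0 gmono (fun i _ => cls_bnd m k _).
have kR : (k%:R : R) != 0 by rewrite pnatr_eq0 -lt0n.
rewrite -{1}(mulfV kR).
by rewrite ler_pM2r ?invr_gt0 ?ltr0n // ler_nat.
Qed.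

Local Close Scope ring_scope.
Local Open Scope nat_scope.
Definition Fnat r m (t : seq nat) (p : nat) := p %/ r * m + nth 0 t (p %% r).

Lemma nth_lt_m r m (t : r.-tuple 'I_m) i : 0 < m -> nth 0 (map val t) i < m.
Proof.
move=> m0; case: (ltnP i (size (map val t))) => H; last by rewrite nth_default.
have /mapP [x _ ->] := mem_nth 0 H; exact: ltn_ord.
Qed.

Arguments nth_lt_m {r m} t i.

Lemma Fnat_mod r m (t : r.-tuple 'I_m) p : 0 < m -> Fnat r m (map val t) p %% m = nth 0 (map val t) (p %% r).
Proof. by move=> m0; rewrite /Fnat modnMDl modn_small // nth_lt_m. Qed.

Lemma Fnat_lt r k m N (t : r.-tuple 'I_m) p : 0 < r -> 0 < m -> k * m <= N -> p < k * r ->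
  Fnat r m (map val t) p < N.
Proof.
move=> r0 m0 kmN pk; have h1 := nth_lt_m t (p %% r) m0.
have h2 : p %/ r < k by rewrite ltn_divLR.
have h3 : (p %/ r).+1 * m <= k * m by rewrite leq_mul2r h2 orbT.
rewrite /Fnat; rewrite mulSn in h3; lia.
Qed.

Lemma Fnat_incr r m (t : r.-tuple 'I_m) p p' : 0 < r -> 0 < m -> sorted ltn (map val t) ->
  p < p' -> Fnat r m (map val t) p < Fnat r m (map val t) p'.
Proof.
move=> r0 m0 st pp.
have h1 := nth_lt_m t (p %% r) m0; have h1' := nth_lt_m t (p' %% r) m0.
have hd : p %/ r <= p' %/ r by apply: leq_div2r; exact: ltnW.
rewrite /Fnat; case: (ltnP (p %/ r) (p' %/ r)) => H.
  have h3 : (p %/ r).+1 * m <= p' %/ r * m by rewrite leq_mul2r H orbT.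
  rewrite mulSn in h3; lia.
have Eq : p %/ r = p' %/ r by apply/eqP; rewrite eqn_leq hd H.
rewrite Eq ltn_add2l.
have E1 := divn_eq p r; have E2 := divn_eq p' r.
have lt : p %% r < p' %% r by rewrite Eq in E1; lia.
apply: (sorted_ltn_nth ltn_trans 0 st) => //; rewrite inE size_map size_tuple; exact: ltn_pmod.
Qed.

Definition Fmap r s m n (t : seq nat) : {ffun 'I_s -> 'I_n.+1} :=
  [ffun p : 'I_s => inord (Fnat r m t p)].

Lemma Fmap_val r s k m n (t : r.-tuple 'I_m) (p : 'I_s) : 0 < r -> 0 < m -> s = k * r ->
  k * m <= n.+1 -> val (Fmap r s m n (map val t) p) = Fnat r m (map val t) p.
Proof.
move=> r0 m0 sE kmN; rewrite ffunE /= inordK //.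
by apply: (@Fnat_lt r k m n.+1 t p r0 m0 kmN); rewrite -sE.
Qed.

Lemma decode r s k m n (t : r.-tuple 'I_m) (j : 'I_s) a : 0 < r -> 0 < m -> s = k * r ->
  k * m <= n.+1 -> j + r <= s ->
  (a \in map val t) = [exists x in [set Fmap r s m n (map val t) y | y in win s j r], (val x %% m == a)].
Proof.
move=> r0 m0 sE kmN jr; apply/idP/idP.
  move=> ain; have ir : index a (map val t) < r by have := index_mem a (map val t); rewrite ain size_map size_tuple.
  set i := index a (map val t) in ir.
  have ai : nth 0 (map val t) i = a by rewrite nth_index.
  have E1 := divn_eq j r; have E2 := ltn_pmod j r0.
  pose p := if j %% r <= i then j %/ r * r + i else (j %/ r).+1 * r + i.
  have pr : p %% r = i by rewrite /p; case: ifP => _; rewrite modnMDl modn_small.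
  have pw : j <= p < j + r by rewrite /p; case: ifP => H; rewrite ?mulSn; lia.
  have ps : p < s by lia.
  apply/exists_inP; exists (Fmap r s m n (map val t) (Ordinal ps)).
    by apply/imsetP; exists (Ordinal ps) => //; rewrite inE.
  by rewrite (@Fmap_val r s k m n t _ r0 m0 sE kmN) /= Fnat_mod // pr ai.
case/exists_inP => x /imsetP [y]; rewrite inE => _ -> /eqP <-.
rewrite (@Fmap_val r s k m n t _ r0 m0 sE kmN) Fnat_mod //.
by apply: mem_nth; rewrite size_map size_tuple ltn_pmod.
Qed.

Definition Qset r s m n : {set {set {set 'I_n.+1}}} :=
  [set copy_of r s n.+1 (Fmap r s m n (map val t)) | t : r.-tuple 'I_m in [set t : r.-tuple 'I_m | sorted ltn (map val t)]].

Lemma copy_edgeP r s n (f : {ffun 'I_s -> 'I_n}) e :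
  e \in copy_of r s n f -> exists2 j : 'I_s, j + r <= s & e = [set f x | x in win s j r].
Proof.
case/imsetP => E; rewrite path_edgesE => /imsetP [j]; rewrite inE => jr -> ->.
by exists j.
Qed.

Lemma copy_edge_in r s n (f : {ffun 'I_s -> 'I_n}) (j : 'I_s) : j + r <= s ->
  [set f x | x in win s j r] \in copy_of r s n f.
Proof.
move=> jr; apply/imsetP; exists (win s j r) => //.
by rewrite path_edgesE; apply/imsetP; exists j; rewrite ?inE.
Qed.

Lemma common_edge r s k m n (t t' : r.-tuple 'I_m) e : 0 < r -> 0 < m -> s = k * r ->
  k * m <= n.+1 -> sorted ltn (map val t) -> sorted ltn (map val t') ->
  e \in copy_of r s n.+1 (Fmap r s m n (map val t)) ->
  e \in copy_of r s n.+1 (Fmap r s m n (map val t')) -> t = t'.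
Proof.
move=> r0 m0 sE kmN st st' /copy_edgeP [j jr E] /copy_edgeP [j' jr' E'].
have H : map val t =i map val t'.
  move=> a; rewrite (@decode r s k m n t j a r0 m0 sE kmN jr) (@decode r s k m n t' j' a r0 m0 sE kmN jr').
  by rewrite -E -E'.
have := irr_sorted_eq ltn_trans ltnn st st' H.
by move/(inj_map val_inj) => Ht; apply: val_inj.
Qed.

Lemma Fmap_incr r s k m n (t : r.-tuple 'I_m) : 0 < r -> 0 < m -> s = k * r ->
  k * m <= n.+1 -> sorted ltn (map val t) -> incr s n.+1 (Fmap r s m n (map val t)).
Proof.
move=> r0 m0 sE kmN st; apply/forallP => i; apply/forallP => j; apply/implyP => ij.
rewrite (@Fmap_val r s k m n t _ r0 m0 sE kmN) (@Fmap_val r s k m n t _ r0 m0 sE kmN).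
exact: Fnat_incr.
Qed.

Lemma Q_sub r s k m n : 0 < r -> 0 < m -> s = k * r -> k * m <= n.+1 ->
  Qset r s m n \subset path_copies r s n.+1.
Proof.
move=> r0 m0 sE kmN; apply/fintype.subsetP => C /imsetP [t]; rewrite inE => st ->.
by apply/imsetP; exists (Fmap r s m n (map val t)) => //; rewrite inE; exact: (@Fmap_incr r s k m n t r0 m0 sE kmN st).
Qed.

Lemma Q_disj r s k m n : 0 < r -> 0 < m -> s = k * r -> k * m <= n.+1 ->
  disjfam (Qset r s m n).
Proof.
move=> r0 m0 sE kmN; apply/forall_inP => C /imsetP [t]; rewrite inE => st ->.
apply/forall_inP => D /imsetP [t']; rewrite inE => st' ->; apply/implyP => neq.
rewrite -setI_eq0; apply/eqP/finset.setP => e; rewrite !inE.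
apply/negP => /andP [e1 e2].
have := @common_edge r s k m n t t' e r0 m0 sE kmN st st' e1 e2 => Ett.
by move: neq; rewrite Ett eqxx.
Qed.

Lemma Q_card r s k m n : 0 < r -> 0 < m -> 0 < k -> s = k * r -> k * m <= n.+1 ->
  #|Qset r s m n| = 'C(m, r).
Proof.
move=> r0 m0 k0 sE kmN; rewrite card_in_imset; first by rewrite card_ltn_sorted_tuples.
move=> t t'; rewrite !inE => st st' Ec.
have s0 : 0 < s by rewrite sE muln_gt0 k0 r0.
have jr : (Ordinal s0) + r <= s by rewrite /= sE; nia.
have e1 := @copy_edge_in r s n.+1 (Fmap r s m n (map val t)) _ jr.
have e2 := e1; rewrite Ec in e2.
exact: (@common_edge r s k m n t t' _ r0 m0 sE kmN st st' e1 e2).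
Qed.

Local Open Scope ring_scope.

Lemma all_bounds (R : realType) r s n : (0 < r)%N -> (0 < s)%N -> (r %| s)%N ->
  (0 < n.+1 %/ (s %/ r))%N ->
  let k := (s %/ r)%N in let m := (n.+1 %/ k)%N in
  let L := 'C(m, r) in let U := 'C(m + k, r) in
  [/\ (L <= nu_path r s n.+1 <= U)%N,
      (L%:R <= nu_star_path R r s n.+1 <= U%:R) &
      (L%:R <= tau_star_path R r s n.+1 <= U%:R)].
Proof.
move=> r0 s0 rs m0 k m L U.
have sE : s = (k * r)%N by rewrite /k divnK.
have k0 : (0 < k)%N by move: s0; rewrite sE muln_gt0 => /andP[].
have kmN : (k * m <= n.+1)%N by rewrite /m mulnC leq_divM.
have nm : (n.+1 %/ k)%N = m by [].
have Qs := @Q_sub r s k m n r0 m0 sE kmN.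
have Qd := @Q_disj r s k m n r0 m0 sE kmN.
have Qc := @Q_card r s k m n r0 m0 k0 sE kmN.
have Tt := @Tw_trans R r s n.+1 m k r0 k0 sE.
have Tv := @Tw_val R r n.+1 m k r0 m0 k0 nm.
have Qp := @indp_pack R r s n.+1 _ Qs Qd.
have Qv := @indp_val R r s n.+1 _ Qs.
have packU : forall w, frac_packing R r s n.+1 w ->
    \sum_(C in path_copies r s n.+1) w C <= U%:R.
  by move=> w Hw; apply: le_trans (@duality R r s n.+1 w _ Hw Tt) Tv.
have transL : forall w, frac_transversal R r s n.+1 w ->
    L%:R <= \sum_(e : {set 'I_n.+1} | #|e| == r) w e.
  by move=> w Hw; rewrite /L -Qc -Qv; exact: (@duality R r s n.+1 _ w Qp Hw).
split.
- apply/andP; split.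
    rewrite /L -Qc /nu_path; apply: (@leq_bigmax_cond _ _ (fun P : {set {set {set 'I_n.+1}}} => #|P|) (Qset r s m n)).
    by rewrite Qs.
  apply/bigmax_leqP => P /andP [Ps Pd].
  rewrite -(ler_nat R) -(@indp_val R r s n.+1 P Ps).
  exact: packU (@indp_pack R r s n.+1 P Ps Pd).
- rewrite /nu_star_path; apply/andP; split.
    apply: ub_le_sup.
      by exists U%:R => y [w Hw <-]; exact: packU.
    by exists (indp R (Qset r s m n)) => //; rewrite Qv Qc.
  apply: ge_sup.
    by exists (\sum_(C in path_copies r s n.+1) indp R (Qset r s m n) C); exists (indp R (Qset r s m n)).
  by move=> y [w Hw <-]; exact: packU.
- rewrite /tau_star_path; apply/andP; split.
    apply: lb_le_inf.
      by exists (\sum_(e : {set 'I_n.+1} | #|e| == r) Tw R n.+1 m k e); exists (Tw R n.+1 m k).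
    by move=> y [w Hw <-]; exact: transL.
  apply: le_trans Tv.
  apply: ge_inf.
    by exists L%:R => y [w Hw <-]; exact: transL.
  by exists (Tw R n.+1 m k).
Qed.

Local Close Scope ring_scope.
Local Open Scope nat_scope.
Lemma expn_mono a b e : a <= b -> a ^ e <= b ^ e.
Proof. by move=> ab; elim: e => // e IH; rewrite !expnS leq_mul. Qed.

Lemma ffact_le_exp n r : n ^_ r <= n ^ r.
Proof.
elim: r n => [|r IH] n; first by rewrite ffactn0 expn0.
rewrite ffactnS expnS leq_mul2l; apply/orP; right.
apply: leq_trans (IH n.-1) _; apply: expn_mono; lia.
Qed.

Lemma ffact_ge n r : (n - r) ^ r <= n ^_ r.
Proof.
elim: r n => [|r IH] n; first by rewrite ffactn0 expn0.
rewrite ffactnS expnS; apply: leq_mul; first lia.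
apply: leq_trans (IH n.-1); apply: expn_mono; lia.
Qed.

Local Open Scope ring_scope.

Lemma powdiff (R : realType) (x y : R) r : 0 <= y -> y <= x ->
  x ^+ r.+1 - y ^+ r.+1 <= r.+1%:R * (x - y) * x ^+ r.
Proof.
move=> y0 yx; elim: r => [|r IH]; first by rewrite !expr1 expr0 mulr1 mul1r.
have x0 : 0 <= x by apply: le_trans yx.
have hyx : y ^+ r.+1 <= x ^+ r.+1 by apply: lerXn2r; rewrite ?nnegrE.
have E : x ^+ r.+2 - y ^+ r.+2 = x * (x ^+ r.+1 - y ^+ r.+1) + y ^+ r.+1 * (x - y).
  by rewrite !exprS; ring.
rewrite E.
have d0 : 0 <= x - y by rewrite subr_ge0.
have h1 : x * (x ^+ r.+1 - y ^+ r.+1) <= x * (r.+1%:R * (x - y) * x ^+ r).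
  by apply: ler_wpM2l.
have h2 : y ^+ r.+1 * (x - y) <= x ^+ r.+1 * (x - y) by apply: ler_wpM2r.
apply: le_trans (lerD h1 h2) _.
rewrite !exprS -[r.+2]addn1 natrD le_eqVlt; apply/orP; left; apply/eqP; ring.
Qed.

Lemma asym (R : realType) (a r : nat) (d : R) : 0 < d ->
  exists N0 : nat, forall N : nat, (N0 <= N)%N ->
    ((N + a) ^ r)%:R <= (1 + d) * ((N - a) ^ r)%:R :> R.
Proof.
move=> d0; case: r => [|r].
  by exists 0%N => N _; rewrite !expn0 mulr1 lerDl ltW.
pose X : R := (r.+1 * (2 * a) * 2 ^ r)%:R.
pose M : R := X / d.
have M0 : 0 <= M by rewrite /M divr_ge0 // ?ler0n // ltW.
exists (3 * a + Num.bound M)%N => N HN.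
have Ha : (a <= N)%N by lia.
pose y : R := (N - a)%:R; pose x : R := (N + a)%:R.
have hxy : x - y = (2 * a)%:R by rewrite /x /y -natrB; [congr (_%:R); lia | lia].
have y0 : 0 <= y by rewrite ler0n.
have yx : y <= x by rewrite ler_nat; lia.
have x2y : x <= 2 * y.
  have -> : 2 * y = (2 * (N - a))%:R by rewrite natrM.
  by rewrite ler_nat; lia.
have hM : M <= y.
  apply: le_trans (ltW (archi_boundP M0)) _; rewrite ler_nat; lia.
have key : X <= d * y.
  by rewrite -ler_pdivrMl // mulrC.
rewrite !natrX -/x -/y.
have hd := @powdiff R x y r y0 yx.
rewrite hxy in hd.
have hp : x ^+ r <= (2 * y) ^+ r by apply: lerXn2r; rewrite ?nnegrE // ?(le_trans y0 yx) ?mulr_ge0.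
rewrite exprMn in hp.
have h3 : r.+1%:R * (2 * a)%:R * x ^+ r <= r.+1%:R * (2 * a)%:R * (2 ^+ r * y ^+ r).
  by apply: ler_wpM2l => //; rewrite mulr_ge0 ?ler0n.
have Xe : X = r.+1%:R * (2 * a)%:R * 2 ^+ r by rewrite /X !natrM natrX.
have h4 : X * y ^+ r <= d * y * y ^+ r by apply: ler_wpM2r => //; rewrite exprn_ge0.
have : x ^+ r.+1 - y ^+ r.+1 <= d * y ^+ r.+1.
  apply: le_trans hd _; apply: le_trans h3 _.
  have E1 : r.+1%:R * (2 * a)%:R * (2 ^+ r * y ^+ r) = X * y ^+ r by rewrite Xe; ring.
  have E2 : d * y * y ^+ r = d * y ^+ r.+1 by rewrite exprS; ring.
  by rewrite E1 -E2.
move=> H; rewrite mulrDl mul1r -lerBlDl; exact: H.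
Qed.

Lemma fin_up (R : realFieldType) (K F b U X P Q t : R) : 0 < K -> 0 < F -> 0 <= t -> 0 <= b ->
  K * F * U <= P -> Q <= F * b -> P <= (1 + t) * Q -> X <= U -> K * X - b <= t * b.
Proof.
move=> K0 F0 t0 b0 H1 H3 H5 HX.
have A1 : K * F * X <= K * F * U by apply: ler_wpM2l => //; rewrite mulr_ge0 // ltW.
have A2 : (1 + t) * Q <= (1 + t) * (F * b) by apply: ler_wpM2l => //; lra.
have A3 : F * (K * X - b - t * b) <= 0.
  have -> : F * (K * X - b - t * b) = K * F * X - (1 + t) * (F * b) by ring.
  lra.
have : K * X - b - t * b <= 0.
  by move: A3; rewrite pmulr_rle0.
lra.
Qed.

Lemma fin_lo (R : realFieldType) (K F b L X P Q t : R) : 0 < K -> 0 < F -> 0 <= t -> 0 <= b ->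
  Q <= K * F * L -> F * b <= P -> P <= (1 + t) * Q -> L <= X -> - (t * b) <= K * X - b.
Proof.
move=> K0 F0 t0 b0 H2 H4 H5 HX.
have A1 : K * F * L <= K * F * X by apply: ler_wpM2l => //; rewrite mulr_ge0 // ltW.
have A2 : (1 + t) * Q <= (1 + t) * (K * F * X) by apply: ler_wpM2l => //; lra.
have A4 : 0 <= F * b * (t * t) by rewrite !mulr_ge0 // ltW.
have A3 : 0 <= (1 + t) * (F * (K * X - b + t * b)).
  have -> : (1 + t) * (F * (K * X - b + t * b)) = (1 + t) * (K * F * X) - F * b + F * b * (t * t) by ring.
  lra.
have B1 : 0 <= F * (K * X - b + t * b) by move: A3; rewrite pmulr_rge0 //; lra.
have : 0 <= K * X - b + t * b by move: B1; rewrite pmulr_rge0.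
lra.
Qed.

Lemma fin_all (R : realFieldType) (K F b L U X P Q eps : R) : 0 < K -> 0 < F -> 0 < eps -> 0 <= b ->
  K * F * U <= P -> Q <= K * F * L -> Q <= F * b -> F * b <= P -> P <= (1 + eps * K) * Q ->
  L <= X -> X <= U -> `|X - K^-1 * b| <= eps * b.
Proof.
move=> K0 F0 e0 b0 H1 H2 H3 H4 H5 HL HU.
have t0 : 0 <= eps * K by rewrite mulr_ge0 // ltW.
have A := @fin_up R K F b U X P Q (eps * K) K0 F0 t0 b0 H1 H3 H5 HU.
have B := @fin_lo R K F b L X P Q (eps * K) K0 F0 t0 b0 H2 H4 H5 HL.
have Kn : K != 0 by rewrite gt_eqF.
have Ki : 0 <= K^-1 by rewrite invr_ge0 ltW.
have E1 : X - K^-1 * b = K^-1 * (K * X - b) by field.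
have E2 : eps * b = K^-1 * (eps * K * b) by field.
rewrite E1 E2 ler_norml; apply/andP; split.
  rewrite -mulrN; apply: ler_wpM2l => //; lra.
apply: ler_wpM2l => //.
Qed.

Theorem theorem3p3 (R : realType) (r s : nat) :
  (0 < r)%N -> (0 < s)%N -> (r %| s)%N ->
  forall eps : R, 0 < eps ->
  exists N : nat, forall n : nat, (N <= n)%N ->
    let c := (r%:R / s%:R) ^+ r in
    let b := ('C(n, r))%:R : R in
    `| (nu_path r s n)%:R - c * b | <= eps * b /\
    `| nu_star_path R r s n - c * b | <= eps * b /\
    `| tau_star_path R r s n - c * b | <= eps * b.
Proof.
move=> r0 s0 rs eps e0.
pose k := (s %/ r)%N.
have sE : s = (k * r)%N by rewrite /k divnK.
have k0 : (0 < k)%N by move: s0; rewrite sE muln_gt0 => /andP[].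
pose a := (k * k + k + k * r + r)%N.
pose K : R := (k ^ r)%:R.
have K0 : 0 < K by rewrite ltr0n expn_gt0 k0.
have [N0 HN0] := @asym R a r (eps * K) (mulr_gt0 e0 K0).
exists (N0 + k)%N => -[|n] Hn; first by lia.
move=> c b.
pose m := (n.+1 %/ k)%N.
have m0 : (0 < m)%N by rewrite /m divn_gt0 //; lia.
move: (@all_bounds R r s n r0 s0 rs m0) => /= [/andP[HL1 HL2] /andP[HS1 HS2] /andP[HT1 HT2]].
pose F : R := (r`!)%:R.
have F0 : 0 < F by rewrite ltr0n fact_gt0.
have b0 : 0 <= b by rewrite ler0n.
have cE : c = K^-1.
  have kn : (k%:R : R) != 0 by rewrite pnatr_eq0 -lt0n.
  have rn : (r%:R : R) != 0 by rewrite pnatr_eq0 -lt0n.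
  rewrite /c /K sE natrM invfM mulrCA mulfV // mulr1 natrX exprVn //.
have kmN : (k * m <= n.+1)%N by rewrite /m mulnC leq_divM.
have kmN2 : (n.+1 < k * m + k)%N.
  have E1 := divn_eq n.+1 k; have E2 := ltn_pmod n.+1 k0; rewrite /m; lia.
pose P : R := ((n.+1 + a) ^ r)%:R.
pose Q : R := ((n.+1 - a) ^ r)%:R.
have hPQ : P <= (1 + eps * K) * Q by apply: HN0; lia.
have nU : (k ^ r * ('C(m + k, r) * r`!) <= (n.+1 + a) ^ r)%N.
  rewrite bin_ffact; apply: leq_trans (_ : k ^ r * (m + k) ^ r <= _)%N.
    by rewrite leq_mul2l ffact_le_exp orbT.
  rewrite -expnMn; apply: expn_mono; rewrite mulnDr; lia.
have nL : ((n.+1 - a) ^ r <= k ^ r * ('C(m, r) * r`!))%N.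
  rewrite bin_ffact; apply: leq_trans (_ : (k * (m - r)) ^ r <= _)%N.
    apply: expn_mono; rewrite mulnBr; lia.
  by rewrite expnMn leq_mul2l ffact_ge orbT.
have nb1 : ((n.+1 - a) ^ r <= 'C(n.+1, r) * r`!)%N.
  rewrite bin_ffact; apply: leq_trans (ffact_ge _ _); apply: expn_mono; lia.
have nb2 : ('C(n.+1, r) * r`! <= (n.+1 + a) ^ r)%N.
  rewrite bin_ffact; apply: leq_trans (ffact_le_exp _ _) _; apply: expn_mono; lia.
have rU : K * F * ('C(m + k, r))%:R <= P.
  have -> : K * F * ('C(m + k, r))%:R = (k ^ r * ('C(m + k, r) * r`!))%:R.
    by rewrite !natrM /K /F; ring.
  by rewrite ler_nat.
have rL : Q <= K * F * ('C(m, r))%:R.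
  have -> : K * F * ('C(m, r))%:R = (k ^ r * ('C(m, r) * r`!))%:R.
    by rewrite !natrM /K /F; ring.
  by rewrite ler_nat.
have rb1 : Q <= F * b by rewrite /F /b -natrM mulnC ler_nat.
have rb2 : F * b <= P by rewrite /F /b -natrM mulnC ler_nat.
rewrite cE; split; last split.
- apply: (@fin_all R K F b _ _ _ P Q eps K0 F0 e0 b0 rU rL rb1 rb2 hPQ); by rewrite ler_nat.
- exact: (@fin_all R K F b _ _ _ P Q eps K0 F0 e0 b0 rU rL rb1 rb2 hPQ).
- exact: (@fin_all R K F b _ _ _ P Q eps K0 F0 e0 b0 rU rL rb1 rb2 hPQ).
Qed.
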